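(* Let $G$ be a finite simple graph with $G\in\mathcal{F}_2$. Then $crx_2(G)=3$ if and only if $G$ is a complete graph on at least $3$ vertices.
   Context: An edge-coloured cycle is rainbow if all its edges have distinct colours. For $k\ge 1$, $\mathcal{F}_k$ is the family of graphs in which any $k$ vertices lie on a common cycle. For $G\in\mathcal{F}_k$, a $k$-rainbow cycle colouring of $G$ is an edge-colouring such that any $k$ vertices of $G$ lie on a common rainbow cycle; $crx_k(G)$ is the minimum number of colours in a $k$-rainbow cycle colouring of $G$. *)

(* Defs.v *)
From mathcomp Require Import all_boot.
Set Implicit Arguments. Unset Strict Implicit. Unset Printing Implicit Defensive.

(* A finite simple graph: vertex type T : finType, adjacency e : rel T,
   assumed symmetric and irreflexive (hypotheses in the theorem). *)

Definition is_cycle (T : finType) (e : rel T) (p : seq T) : bool :=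
  [&& 3 <= size p, uniq p & cycle e p].

Definition cycle_edges (T : eqType) (p : seq T) : seq (T * T) :=
  zip p (rot 1 p).

Definition in_F2 (T : finType) (e : rel T) : Prop :=
  forall x y : T, x != y ->
    exists p : seq T, is_cycle e p /\ x \in p /\ y \in p.

Definition edge_colouring (T : finType) (e : rel T) (k : nat)
    (c : T -> T -> nat) : Prop :=
  forall x y, e x y -> c x y = c y x /\ c x y < k.

Definition rainbow (T : eqType) (c : T -> T -> nat) (p : seq T) : bool :=
  uniq [seq c xy.1 xy.2 | xy <- cycle_edges p].

Definition rainbow_cycle_colouring2 (T : finType) (e : rel T) (k : nat)
    (c : T -> T -> nat) : Prop :=
  edge_colouring e k c /\
  forall x y : T, x != y ->
    exists p : seq T, [&& is_cycle e p, rainbow c p, x \in p & y \in p].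

Definition has_rcc2 (T : finType) (e : rel T) (k : nat) : Prop :=
  exists c : T -> T -> nat, rainbow_cycle_colouring2 e k c.

Definition crx2_eq (T : finType) (e : rel T) (n : nat) : Prop :=
  has_rcc2 e n /\ forall k, k < n -> ~ has_rcc2 e k.

Definition complete_atleast3 (T : finType) (e : rel T) : Prop :=
  3 <= #|T| /\ forall x y : T, x != y -> e x y.

(* Main.v *)
Require Import Defs.
From mathcomp Require Import all_boot.
From mathcomp Require Import zify.

Set Implicit Arguments. Unset Strict Implicit. Unset Printing Implicit Defensive.

Lemma zip_edges (T : eqType) (e : rel T) x y s :
  path e x (rcons s y) -> all (fun ab => e ab.1 ab.2) (zip (x :: s) (rcons s y)).
Proof.
elim: s x => [|a s IH] x /=; first by rewrite andbT => ->.
by case/andP=> -> /IH.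
Qed.

Lemma cycle_edges_e (T : eqType) (e : rel T) p :
  cycle e p -> all (fun ab => e ab.1 ab.2) (cycle_edges p).
Proof.
case: p => [|x s] //= H.
rewrite /cycle_edges rot1_cons; exact: zip_edges.
Qed.

Lemma size_cycle_edges (T : eqType) (p : seq T) : size (cycle_edges p) = size p.
Proof. by rewrite /cycle_edges size_zip size_rot minnn. Qed.

Lemma uniq_bounded (s : seq nat) k : uniq s -> all (fun x => x < k) s -> size s <= k.
Proof.
move=> Hu Ha; rewrite -(size_iota 0 k); apply: uniq_leq_size => // x Hx.
by rewrite mem_iota add0n; move/allP: Ha => /(_ x Hx).
Qed.

Lemma rainbow_size (T : finType) (e : rel T) k c p :
  edge_colouring e k c -> cycle e p -> rainbow c p -> size p <= k.
Proof.
move=> Hc Hcy Hr.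
have := uniq_bounded (k := k) Hr.
rewrite size_map size_cycle_edges; apply.
apply/allP=> z /mapP [ab Hab ->].
move/allP: (cycle_edges_e Hcy) => /(_ ab Hab) Hab'.
by case: (Hc _ _ Hab').
Qed.

Definition rr n := if n %% 3 == 2 then 5 else n %% 3.
Definition pos n j := (j - rr n) %% 3.
Definition blk n j := (j - rr n) %/ 3.

Definition base (a b : nat) : nat :=
  match a, b with
  | 0, 1 => 2 | 0, 2 => 1 | 0, 3 => 1 | 0, 4 => 2 | 1, 2 => 0
  | 1, 3 => 0 | 1, 4 => 2 | 2, 3 => 2 | 2, 4 => 0 | 3, 4 => 1 | _, _ => 0
  end.

Definition bcol a b := base (minn a b) (maxn a b).

Definition col n i j :=
  if (i < rr n) && (j < rr n) then bcol i j
  else if [&& rr n <= i, rr n <= j & blk n i == blk n j]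
       then (pos n i + pos n j) %% 3
       else (2 * pos n (maxn i j)) %% 3.

Lemma col_sym n i j : col n i j = col n j i.
Proof.
rewrite /col /bcol andbC minnC maxnC addnC; congr (if _ then _ else _).
by rewrite [blk n j == _]eq_sym; case: (rr n <= i); case: (rr n <= j).
Qed.

Lemma base_lt3 a b : base a b < 3.
Proof. by case: a => [|[|[|[|[|a]]]]]; case: b => [|[|[|[|[|b]]]]]. Qed.

Lemma col_lt3 n i j : col n i j < 3.
Proof.
rewrite /col; case: ifP => _; first exact: base_lt3.
by case: ifP => _; rewrite ltn_mod.
Qed.

Definition tabok :=
  all (fun i => all (fun j => (i < j) ==> has (fun k =>
     [&& k != i, k != j, bcol i j != bcol j k, bcol i j != bcol i k
       & bcol j k != bcol i k]) (iota 0 5)) (iota 0 5)) (iota 0 5).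

Lemma tab : tabok.
Proof. by []. Qed.

Lemma rr_props n : 3 <= n -> rr n <= n /\ exists m, n - rr n = m * 3.
Proof.
move=> Hn; rewrite /rr.
have Hd := divn_eq n 3; have Hm : n %% 3 < 3 by rewrite ltn_mod.
set a := n %/ 3 in Hd *; set b := n %% 3 in Hd Hm *.
case: ifP => /eqP Hb.
  split; first lia. exists a.-1; lia.
split; first lia. exists a; lia.
Qed.

Lemma posblk n b q : q < 3 ->
  pos n (rr n + (b * 3 + q)) = q /\ blk n (rr n + (b * 3 + q)) = b.
Proof.
move=> Hq; rewrite /pos /blk addKn; split.
  by rewrite modnMDl modn_small.
by rewrite divnMDl // divn_small // addn0.
Qed.

Lemma trip1 p : p < 3 ->
  [&& (2 * p) %% 3 != (p + (p.+1 %% 3)) %% 3,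
      (2 * p) %% 3 != (2 * (p.+1 %% 3)) %% 3
    & (p + (p.+1 %% 3)) %% 3 != (2 * (p.+1 %% 3)) %% 3].
Proof. by case: p => [|[|[|p]]]. Qed.

Lemma trip2 a b : a < 3 -> b < 3 -> a != b ->
  [&& (a + b) %% 3 != (b + (3 - a - b)) %% 3,
      (a + b) %% 3 != (a + (3 - a - b)) %% 3
    & (b + (3 - a - b)) %% 3 != (a + (3 - a - b)) %% 3].
Proof. by case: a => [|[|[|a]]]; case: b => [|[|[|b]]]. Qed.

Lemma core n i j : 3 <= n -> i < j -> j < n ->
  exists k, [/\ k < n, k != i & k != j] /\
    [/\ col n i j != col n j k, col n i j != col n i k & col n j k != col n i k].
Proof.
move=> Hn Hij Hjn.
have [Hrn [m Hm]] := rr_props Hn.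
set r := rr n in Hrn Hm.
case: (ltnP j r) => Hjr.
  have Hr5 : r = 5.
    rewrite /r /rr; case: ifP => // /negbT H.
    have : n %% 3 < 3 by rewrite ltn_mod.
    rewrite /r /rr (negbTE H) in Hjr. lia.
  have Hj5 : j < 5 by rewrite -Hr5.
  have Hi5 : i < 5 by lia.
  have := tab; move/allP => /(_ i); rewrite mem_iota add0n => /(_ Hi5).
  move/allP => /(_ j); rewrite mem_iota add0n => /(_ Hj5).
  rewrite Hij implyTb; case/hasP => k; rewrite mem_iota add0n => Hk5.
  case/and5P=> Hki Hkj H1 H2 H3.
  have Hcol : forall a b, a < 5 -> b < 5 -> col n a b = bcol a b.
    by move=> a b Ha Hb; rewrite /col -/r Hr5 Ha Hb.
  exists k; split; first (split => //; lia); split.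
  - by rewrite !Hcol.
  - by rewrite !Hcol.
  - by rewrite !Hcol.
have Hdj := divn_eq (j - r) 3.
have Hpj : (j - r) %% 3 < 3 by rewrite ltn_mod.
set b := (j - r) %/ 3 in Hdj.
set p := (j - r) %% 3 in Hdj Hpj.
have Hb : b < m.
  have : j - r < m * 3 by lia.
  rewrite Hdj; nia.
have Hjeq : j = r + (b * 3 + p) by lia.
have Hposj : pos n j = p by [].
have Hblkj : blk n j = b by [].
case: (boolP [&& r <= i & blk n i == b]) => Hsame.
  case/andP: Hsame => Hri /eqP Hbi.
  have Hdi := divn_eq (i - r) 3.
  have Hpi : (i - r) %% 3 < 3 by rewrite ltn_mod.
  set pi := (i - r) %% 3 in Hdi Hpi.
  have Hposi : pos n i = pi by [].
  have Hbi' : (i - r) %/ 3 = b by [].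
  rewrite Hbi' in Hdi.
  have Hpij : pi != p by apply/eqP => E; lia.
  set q := 3 - pi - p.
  have Hq : q < 3 by lia.
  have [Hposk Hblkk] := posblk n b Hq.
  set k := r + (b * 3 + q) in Hposk Hblkk *.
  have Hqp : q != p by rewrite /q; apply/eqP; lia.
  have Hqpi : q != pi by rewrite /q; apply/eqP; lia.
  exists k; split; first split.
  - rewrite /k; lia.
  - by apply/eqP => E; move: Hqpi; rewrite -Hposk E Hposi eqxx.
  - by apply/eqP => E; move: Hqp; rewrite -Hposk E Hposj eqxx.
  split.
  - have Hrk : r <= k by rewrite /k leq_addr.
    have Hir : ~~ (i < r) by rewrite -leqNgt.
    have Hjr' : ~~ (j < r) by rewrite -leqNgt.
    have Hkr : ~~ (k < r) by rewrite -leqNgt.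
    have := trip2 Hpi Hpj Hpij; case/and3P => H1 H2 H3.
    rewrite /col -/r (negbTE Hir) (negbTE Hjr') (negbTE Hkr) /=.
    by rewrite Hri Hjr Hrk /= Hbi Hblkj Hblkk eqxx Hposi Hposj Hposk.
  - have Hrk : r <= k by rewrite /k leq_addr.
    have Hir : ~~ (i < r) by rewrite -leqNgt.
    have Hjr' : ~~ (j < r) by rewrite -leqNgt.
    have Hkr : ~~ (k < r) by rewrite -leqNgt.
    have := trip2 Hpi Hpj Hpij; case/and3P => H1 H2 H3.
    rewrite /col -/r (negbTE Hir) (negbTE Hjr') (negbTE Hkr) /=.
    by rewrite Hri Hjr Hrk /= Hbi Hblkj Hblkk eqxx Hposi Hposj Hposk.
  - have Hrk : r <= k by rewrite /k leq_addr.
    have Hir : ~~ (i < r) by rewrite -leqNgt.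
    have Hjr' : ~~ (j < r) by rewrite -leqNgt.
    have Hkr : ~~ (k < r) by rewrite -leqNgt.
    have := trip2 Hpi Hpj Hpij; case/and3P => H1 H2 H3.
    rewrite /col -/r (negbTE Hir) (negbTE Hjr') (negbTE Hkr) /=.
    by rewrite Hri Hjr Hrk /= Hbi Hblkj Hblkk eqxx Hposi Hposj Hposk.
set q := p.+1 %% 3.
have Hq : q < 3 by rewrite ltn_mod.
have [Hposk Hblkk] := posblk n b Hq.
set k := r + (b * 3 + q) in Hposk Hblkk *.
have Hlow : i < r + b * 3.
  case: (ltnP i r) => Hir; first lia.
  have Hbi : blk n i != b by move: Hsame; rewrite Hir.
  have : blk n i <= b.
    rewrite /blk -/r -Hblkj /blk -/r; apply: leq_div2r; lia.
  rewrite leq_eqVlt (negbTE Hbi) /= => Hlt.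
  have Hdi := divn_eq (i - r) 3.
  have : (i - r) %% 3 < 3 by rewrite ltn_mod.
  rewrite /blk -/r in Hlt. nia.
have Hqp : q != p by rewrite /q; case: (p) Hpj => [|[|[|]]].
have Hrk : r <= k by rewrite /k leq_addr.
have Hjr' : ~~ (j < r) by rewrite -leqNgt.
have Hkr : ~~ (k < r) by rewrite -leqNgt.
have Hnot : forall x, x < r + b * 3 -> ~~ [&& r <= x, r <= j & blk n x == blk n j]
            /\ ~~ [&& r <= x, r <= k & blk n x == blk n k].
  move=> x Hx; rewrite Hblkj Hblkk.
  case: (ltnP x r) => Hxr //=.
  have : blk n x < b.
    rewrite /blk -/r; have := divn_eq (x - r) 3; nia.
  rewrite ltn_neqAle => /andP [Hne _].
  by rewrite (negbTE Hne) !andbF.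
have [N1 N2] := Hnot i Hlow.
have Hik : maxn i k = k by apply/maxn_idPr; rewrite /k; lia.
have Hij' : maxn i j = j by apply/maxn_idPr; lia.
have Cij : col n i j = (2 * p) %% 3.
  by rewrite /col -/r (negbTE Hjr') andbF (negbTE N1) Hij'.
have Cik : col n i k = (2 * q) %% 3.
  by rewrite /col -/r (negbTE Hkr) andbF (negbTE N2) Hik Hposk.
have Cjk : col n j k = (p + q) %% 3.
  by rewrite /col -/r (negbTE Hjr') /= Hjr Hrk Hblkj Hblkk eqxx /= Hposk.
have := trip1 Hpj; rewrite -/q; case/and3P => H1 H2 H3.
exists k; split; first split.
- rewrite /k; lia.
- apply/eqP => E; move: Hlow; rewrite -E /k; lia.
- by apply/eqP => E; move: Hqp; rewrite -Hposk E Hposj eqxx.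
split.
- by rewrite Cij Cjk.
- by rewrite Cij Cik.
- by rewrite Cjk Cik.
Qed.

Lemma no_small (T : finType) (e : rel T) k (x y : T) :
  x != y -> k < 3 -> ~ has_rcc2 e k.
Proof.
move=> Hxy Hk [c [Hc Hr]].
have [p /and4P [/and3P [Hs _ Hcy] Hrb _ _]] := Hr x y Hxy.
have := rainbow_size Hc Hcy Hrb; lia.
Qed.

Theorem theorem3 (T : finType) (e : rel T)
    (e_sym : symmetric e) (e_irr : irreflexive e) (hF2 : in_F2 e) :
  crx2_eq e 3 <-> complete_atleast3 e.
Proof.
split.
- case=> [[c [Hc Hr]] Hmin].
  case: (ltnP 1 #|T|) => Hcard; last first.
    have Heq : forall u v : T, v = u.
      by move=> u v; move/card_le1P: Hcard => /(_ u isT v); rewrite !inE => /esym/eqP.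
    exfalso; apply: (Hmin 0) => //.
    exists (fun _ _ => 0); split.
      by move=> x y Hxy; exfalso; rewrite (Heq x y) e_irr in Hxy.
    by move=> x y Hxy; exfalso; rewrite (Heq x y) eqxx in Hxy.
  have [x0 [y0 [_ _ Hxy0]]] := card_gt1P Hcard.
  split.
    have [p [/and3P [Hs Hu _] _]] := hF2 x0 y0 Hxy0.
    apply: leq_trans Hs _; rewrite -(card_uniqP Hu); exact: max_card.
  move=> x y Hxy.
  have [p /and4P [/and3P [Hs Hu Hcy] Hrb Hx Hy]] := Hr x y Hxy.
  have Hs3 := rainbow_size Hc Hcy Hrb.
  case: p Hs Hu Hcy Hrb Hx Hy Hs3 => [|a [|b [|d [|f p]]]] //= _ _.
  case/and4P => Hab Hbd Hda _ _.
  rewrite !inE => /or3P [] /eqP Ex /or3P [] /eqP Ey _; subst x y;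
    rewrite ?eqxx in Hxy => //; by rewrite // e_sym.
- case=> H3 Hcomp.
  set n := #|T|.
  have Hmain : forall x y : T, (enum_rank x < enum_rank y)%N ->
      exists p, [&& is_cycle e p, rainbow (fun u v => col n (enum_rank u) (enum_rank v)) p,
                    x \in p & y \in p].
    move=> x y Hlt.
    have [k [[Hkn Hki Hkj] [C1 C2 C3]]] := core H3 Hlt (ltn_ord (enum_rank y)).
    set z := enum_val (Ordinal Hkn : 'I_#|T|).
    have Hz : (enum_rank z : nat) = k by rewrite /z enum_valK.
    have Hxz : x != z by apply/eqP => E; move: Hki; rewrite -Hz -E eqxx.
    have Hyz : y != z by apply/eqP => E; move: Hkj; rewrite -Hz -E eqxx.
    have Hxy : x != y by apply/eqP => E; move: Hlt; rewrite E ltnn.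
    exists [:: x; y; z].
    rewrite /is_cycle /rainbow /cycle_edges /= !inE !eqxx !orbT !andbT /=.
    rewrite negb_or Hxy Hxz Hyz !Hcomp // 1?eq_sym //=.
    rewrite Hz [col n k _]col_sym.
    move: C1 C2 C3; rewrite -/n => C1 C2 C3.
    by rewrite negb_or eq_sym C1 C2 C3.
  split.
    exists (fun u v => col n (enum_rank u) (enum_rank v)); split.
      by move=> u v _; split; [exact: col_sym | exact: col_lt3].
    move=> x y Hxy.
    case: (ltngtP (enum_rank x) (enum_rank y)) => Hc.
    + exact: Hmain.
    + have [p /and4P [A B C D]] := Hmain y x Hc.
      by exists p; rewrite A B C D.
    + by move: Hxy; rewrite (enum_rank_inj (val_inj Hc)) eqxx.
  move=> k Hk.
  have H1 : 1 < #|T| by exact: ltnW H3.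
  case/card_gt1P: H1 => x0 [y0 [_ _ Hxy0]].
  exact: no_small Hxy0 Hk.
Qed.
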